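(* Let $V$ and $W$ be subsets of normed spaces over $\mathbb{R}$ or $\mathbb{C}$ and $T:V\to W$. Assume that for every $w\in T(V)$ the set $\arg\min\{\|v\|:v\in V,\ T(v)=w\}$ is a singleton. Let $W'=\{w\in W:\arg\min\{\|w_0-w\|:w_0\in T(V)\}\text{ is a singleton}\}$. Then there exists a pseudo-inverse $S:W'\to V$ of $T$, and it is unique.
   Context: Let $V,W$ be subsets of normed spaces over $\mathbb{R}$ or $\mathbb{C}$ and $T:V\to W$. For a set $E\subseteq W$ with either $E\subseteq T(V)$ or $T(V)\subseteq E$, an operator $S:E\to V$ is a pseudo-inverse of $T$ (on $E$) if: (BAS) for every $w\in E$, the minimum $m_w=\min_{v\in V}\|T(v)-w\|$ is attained, the norm attains its minimum on $\{v\in V:\|T(v)-w\|=m_w\}$, and $S(w)\in\arg\min\{\|v\|:v\in V,\ \|T(v)-w\|=m_w\}$; and (MP2) $S(T(S(w)))=S(w)$ for every $w\in E$. *)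

(* Defs.v *)
From HB Require Import structures.
From mathcomp Require Import all_boot all_order all_algebra.
From mathcomp Require Import all_classical all_reals all_analysis.
Set Implicit Arguments. Unset Strict Implicit. Unset Printing Implicit Defensive.
Import Order.TTheory GRing.Theory Num.Theory.
Local Open Scope classical_set_scope.
Local Open Scope ring_scope.

Definition argmin_set (K : numDomainType) (U : Type) (A : set U) (f : U -> K) : set U :=
  [set x | A x /\ forall y, A y -> f x <= f y].

Definition is_singleton (U : Type) (A : set U) : Prop := exists x, A = [set x].

Definition min_value (K : numDomainType) (U : Type) (A : set U) (f : U -> K) (m : K) : Prop :=
  (exists2 x, A x & f x = m) /\ (forall y, A y -> m <= f y).

(* S (defined on the ambient space, relevant on E) is a pseudo-inverse of
   T : V -> W on E, where V, W are subsets of normed spaces X, Y over K. *)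
Definition pseudo_inverse (K : numFieldType) (X Y : normedModType K)
    (V : set X) (T : X -> Y) (E : set Y) (S : Y -> X) : Prop :=
  (E `<=` T @` V \/ T @` V `<=` E) /\
  (forall w, E w ->
     exists m : K,
       min_value V (fun v => `|T v - w|) m /\
       (argmin_set [set v | V v /\ `|T v - w| = m] (fun v => `|v|) !=set0) /\
       argmin_set [set v | V v /\ `|T v - w| = m] (fun v => `|v|) (S w)) /\
  (* (MP2), including that S (T (S w)) is defined, i.e. T (S w) lies in E *)
  (forall w, E w -> E (T (S w)) /\ S (T (S w)) = S w).

(* Main.v *)
Require Import Defs.
From HB Require Import structures.
From mathcomp Require Import all_boot all_order all_algebra.
From mathcomp Require Import all_classical all_reals all_analysis.
Import Order.TTheory GRing.Theory Num.Theory.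
Local Open Scope classical_set_scope.
Local Open Scope ring_scope.

Section Helpers.
Variables (K : numFieldType) (X Y : normedModType K) (V : set X) (T : X -> Y).

Definition Pw (w : Y) (v : X) : Prop := exists m : K,
  min_value V (fun v => `|T v - w|) m /\
  argmin_set [set v | V v /\ `|T v - w| = m] (fun v => `|v|) v.

Lemma key (w a : Y) (x : X) :
  argmin_set (T @` V) (fun w0 => `|w0 - w|) = [set a] ->
  Pw w x -> argmin_set [set v | V v /\ T v = a] (fun v => `|v|) x.
Proof.
move=> E [m [[[x0 Vx0 ex0] mle] [[Vx ex] xmin]]].
have inA : forall u, V u -> `|T u - w| = m -> T u = a.
  move=> u Vu eu.
  have : argmin_set (T @` V) (fun w0 => `|w0 - w|) (T u).
    split; first by exists u.
    by move=> y [u' Vu' <-]; rewrite eu; apply: mle.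
  by rewrite E.
split; first by split => //; apply: inA.
move=> y [Vy Ty]; apply: xmin; split => //.
by rewrite Ty -(inA x0) // ex0.
Qed.

Lemma exP (w a : Y) :
  argmin_set (T @` V) (fun w0 => `|w0 - w|) = [set a] ->
  (forall w, (T @` V) w ->
       is_singleton (argmin_set [set v | V v /\ T v = w] (fun v => `|v|))) ->
  exists v, Pw w v.
Proof.
move=> E huniq.
have : argmin_set (T @` V) (fun w0 => `|w0 - w|) a by rewrite E.
move=> [[x Vx Tx] amin].
have [s Es] := huniq a (ex_intro2 _ _ x Vx Tx).
have : argmin_set [set v | V v /\ T v = a] (fun v => `|v|) s by rewrite Es.
move=> [[Vs Ts] smin].
have inA : forall u, V u -> `|T u - w| = `|a - w| -> T u = a.
  move=> u Vu eu.
  have : argmin_set (T @` V) (fun w0 => `|w0 - w|) (T u).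
    split; first by exists u.
    by move=> y Ty; rewrite eu; apply: amin.
  by rewrite E.
exists s, `|a - w|; split.
  split; first by exists x => //; rewrite Tx.
  by move=> y Vy; apply: amin; exists y.
split; first by split => //; rewrite Ts.
by move=> y [Vy ey]; apply: smin; split => //; apply: inA.
Qed.

Lemma self_argmin (w : Y) : (T @` V) w ->
  argmin_set (T @` V) (fun w0 => `|w0 - w|) = [set w].
Proof.
move=> Tw; apply/seteqP; split => y /=.
  move=> [_ /(_ w Tw)]; rewrite subrr normr0 normr_le0 subr_eq0.
  by move/eqP.
move=> ->; split => // z _; by rewrite subrr normr0.
Qed.
End Helpers.
Arguments key {K X Y V T w a x}.
Arguments exP {K X Y V T w a}.
Arguments self_argmin {K X Y V T w}.

Theorem mainTheorem6 (K : numFieldType) (X Y : normedModType K)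
    (V : set X) (W : set Y) (T : X -> Y)
    (hT : forall v, V v -> W (T v))
    (huniq : forall w, (T @` V) w ->
       is_singleton (argmin_set [set v | V v /\ T v = w] (fun v => `|v|))) :
  let W' := [set w | W w /\
               is_singleton (argmin_set (T @` V) (fun w0 => `|w0 - w|))] in
  (exists S : Y -> X, pseudo_inverse V T W' S) /\
  (forall S1 S2 : Y -> X, pseudo_inverse V T W' S1 -> pseudo_inverse V T W' S2 ->
     forall w, W' w -> S1 w = S2 w).
Proof.
move=> W'.
have sub : T @` V `<=` W'.
  move=> w Tw; split; first by case: Tw => x Vx <-; apply: hT.
  by exists w; apply: self_argmin.
have uniq : forall w v, W' w -> @Pw K X Y V T w v ->
    forall a, argmin_set (T @` V) (fun w0 => `|w0 - w|) = [set a] ->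
    forall s, argmin_set [set v | V v /\ T v = a] (fun v => `|v|) = [set s] ->
    v = s.
  move=> w v _ Pv a Ea s Es.
  by have := key Ea Pv; rewrite Es; move=> h; exact: h.
have Ta : forall w a, argmin_set (T @` V) (fun w0 => `|w0 - w|) = [set a] ->
    (T @` V) a.
  move=> w a E.
  have : argmin_set (T @` V) (fun w0 => `|w0 - w|) a by rewrite E.
  by case.
split.
  exists (fun w => get (@Pw K X Y V T w)).
  have Pget : forall w, W' w -> @Pw K X Y V T w (get (@Pw K X Y V T w)).
    move=> w [_ [a Ea]]; apply: getPex; exact: exP Ea huniq.
  split; first by right.
  split.
    move=> w Ww; have [m [h1 h2]] := Pget w Ww.
    by exists m; split => //; split => //; exists (get (@Pw K X Y V T w)).
  move=> w Ww; have Ww' := Ww; case: Ww' => _ [a Ea].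
  have [s Es] := huniq a (Ta _ _ Ea).
  have e1 := uniq _ _ Ww (Pget w Ww) _ Ea _ Es.
  have Tga : T (get (@Pw K X Y V T w)) = a.
    have [hh _] := key Ea (Pget w Ww); by case: hh.
  have Wa : W' a by apply: sub; apply: Ta Ea.
  split; first by rewrite Tga.
  rewrite Tga e1.
  exact: uniq _ _ Wa (Pget a Wa) _ (self_argmin (Ta _ _ Ea)) _ Es.
move=> S1 S2 [_ [B1 _]] [_ [B2 _]] w Ww.
have Ww' := Ww; case: Ww' => _ [a Ea].
have [s Es] := huniq a (Ta _ _ Ea).
have [m1 [h1 [_ h1']]] := B1 w Ww.
have [m2 [h2 [_ h2']]] := B2 w Ww.
rewrite (uniq w (S1 w) Ww (ex_intro _ m1 (conj h1 h1')) _ Ea _ Es).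
by rewrite (uniq w (S2 w) Ww (ex_intro _ m2 (conj h2 h2')) _ Ea _ Es).
Qed.
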